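(* Let $\mathsf{K}$ be a variety, $\mathbf{B}\in\mathsf{K}$, and $\mathbf{A}\leq\mathbf{B}$ fully epic in $\mathsf{K}$. Then $\theta=\mathrm{Cg}^{\mathbf{B}}(\theta{\upharpoonright}_A)$ for every congruence $\theta$ of $\mathbf{B}$.
   Context: $\mathrm{Cg}^{\mathbf{B}}(X)$ is the least congruence of $\mathbf{B}$ containing $X\subseteq B\times B$; $\theta{\upharpoonright}_A=\theta\cap(A\times A)$. $\mathbf{A}\leq\mathbf{B}$ is epic in $\mathsf{K}$ if for all $\mathbf{C}\in\mathsf{K}$ and homomorphisms $g,h\colon\mathbf{B}\to\mathbf{C}$, $g{\upharpoonright}_A=h{\upharpoonright}_A$ implies $g=h$; it is full in $\mathsf{K}$ if it is proper, almost total ($B=\mathrm{Sg}^{\mathbf{B}}(A\cup\{b\})$ for some $b$), and every congruence $\theta\neq\mathrm{id}_B$ of $\mathbf{B}$ relates each $b\in B$ to some $a\in A$; fully epic means full and epic. *)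

(* Defs.v *)
From mathcomp Require Import all_boot.
Set Implicit Arguments.
Unset Strict Implicit.
Unset Printing Implicit Defensive.

Record signature := Signature { op_sym : Type; arity : op_sym -> nat }.

Record algebra (S : signature) := Algebra {
  carrier :> Type;
  interp : forall o : op_sym S, ('I_(arity o) -> carrier) -> carrier }.
Arguments interp {S} a o _.

Inductive term (S : signature) (X : Type) : Type :=
| tvar : X -> term S X
| tapp : forall o : op_sym S, ('I_(arity o) -> term S X) -> term S X.

Fixpoint eval_term (S : signature) (X : Type) (A : algebra S) (v : X -> A)
  (t : term S X) : A :=
  match t with
  | tvar x => v x
  | tapp o ts => interp A o (fun i => eval_term v (ts i))
  end.

Definition identity (S : signature) := (term S nat * term S nat)%type.

Definition satisfies (S : signature) (A : algebra S) (e : identity S) : Prop :=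
  forall v : nat -> A, eval_term v e.1 = eval_term v e.2.

(* A class of algebras K is a variety: it is the class of all models of
   some set of identities (Birkhoff: equivalently, closed under H, S, P). *)
Definition is_variety (S : signature) (K : algebra S -> Prop) : Prop :=
  exists E : identity S -> Prop,
    forall A : algebra S, K A <-> (forall e, E e -> satisfies A e).

Definition is_hom (S : signature) (B C : algebra S) (g : B -> C) : Prop :=
  forall (o : op_sym S) (args : 'I_(arity o) -> B),
    g (interp B o args) = interp C o (fun i => g (args i)).

(* Subuniverses (subalgebras A <= B are given by their universes A ⊆ B). *)
Definition subuniverse (S : signature) (B : algebra S) (A : B -> Prop) : Prop :=
  forall (o : op_sym S) (args : 'I_(arity o) -> B),
    (forall i, A (args i)) -> A (interp B o args).

Definition Sg (S : signature) (B : algebra S) (X : B -> Prop) : B -> Prop :=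
  fun x => forall P : B -> Prop, subuniverse P -> (forall y, X y -> P y) -> P x.

Definition is_congruence (S : signature) (B : algebra S) (th : B -> B -> Prop)
  : Prop :=
  [/\ (forall x, th x x),
      (forall x y, th x y -> th y x),
      (forall x y z, th x y -> th y z -> th x z) &
      (forall (o : op_sym S) (a b : 'I_(arity o) -> B),
          (forall i, th (a i) (b i)) -> th (interp B o a) (interp B o b))].

Definition Cg (S : signature) (B : algebra S) (X : B -> B -> Prop)
  : B -> B -> Prop :=
  fun x y => forall th, is_congruence th -> (forall a b, X a b -> th a b) -> th x y.

(* θ↾_A = θ ∩ (A × A), as a relation on B. *)
Definition restrict_rel (S : signature) (B : algebra S) (th : B -> B -> Prop)
  (A : B -> Prop) : B -> B -> Prop :=
  fun x y => [/\ A x, A y & th x y].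

Definition epic_in (S : signature) (K : algebra S -> Prop) (B : algebra S)
  (A : B -> Prop) : Prop :=
  forall (C : algebra S), K C ->
  forall g h : B -> C, is_hom g -> is_hom h ->
    (forall a, A a -> g a = h a) -> forall b, g b = h b.

(* A <= B is full in K: proper, almost total, and every non-identity
   congruence of B relates each element of B to some element of A. *)
Definition full_in (S : signature) (K : algebra S -> Prop) (B : algebra S)
  (A : B -> Prop) : Prop :=
  [/\ (exists b, ~ A b),
      (exists b, forall x, Sg (fun y => A y \/ y = b) x) &
      (forall th, is_congruence th -> ~ (forall x y, th x y <-> x = y) ->
         forall b, exists2 a, A a & th b a)].

Definition fully_epic_in (S : signature) (K : algebra S -> Prop) (B : algebra S)
  (A : B -> Prop) : Prop :=
  full_in K A /\ epic_in K A.

(* Main.v *)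
Require Import Defs.
From mathcomp Require Import all_boot.
From Stdlib Require Import Classical ClassicalEpsilon.

Lemma Cg_cong (S : signature) (B : algebra S) (X : B -> B -> Prop) :
  is_congruence (Cg X).
Proof.
split.
- by move=> x th [R _ _ _] _; apply: R.
- by move=> x y H th Hc HX; case: (Hc) => _ Sy _ _; apply: Sy; apply: H.
- by move=> x y z H1 H2 th Hc HX; case: (Hc) => _ _ T _; apply: (T _ y); [apply: H1|apply: H2].
- move=> o a b H th Hc HX; case: (Hc) => _ _ _ C; apply: C => i; exact: H.
Qed.

Theorem mainTheorem13 (S : signature) (K : algebra S -> Prop) (B : algebra S)
  (A : B -> Prop) :
  is_variety K -> K B -> subuniverse A -> fully_epic_in K A ->
  forall th : B -> B -> Prop, is_congruence th ->
    forall x y, th x y <-> Cg (restrict_rel th A) x y.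
Proof.
move=> _ KB subA [[[b0 nb0] _ full] epic] th thc x y.
have Cgc := @Cg_cong S B (restrict_rel th A).
case: (thc) => Rt St Tt Ct.
case: (Cgc) => Rc Sc Tc Cc.
have Cgth : forall u v, Cg (restrict_rel th A) u v -> th u v.
  by move=> u v H; apply: H => // a b [].
split; last exact: Cgth.
move=> Hxy.
case: (classic (forall u v, Cg (restrict_rel th A) u v <-> u = v)) => Hid; last first.
  have [a Aa Ha] := full _ Cgc Hid x.
  have [a' Aa' Ha'] := full _ Cgc Hid y.
  have Haa : Cg (restrict_rel th A) a a'.
    move=> th' _ HX; apply: HX; split => //.
    apply: (Tt _ x); first by apply: St; apply: Cgth.
    by apply: (Tt _ y) => //; apply: Cgth.
  apply: (Tc _ a) => //; apply: (Tc _ a') => //; exact: Sc.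
have inj : forall a a', A a -> A a' -> th a a' -> a = a'.
  move=> a a' Aa Aa' H; apply/Hid => th' _ HX; exact: HX.
case: (classic (forall u v, th u v <-> u = v)) => Htid.
  by move/Htid: Hxy => ->; apply: Rc.
have ex : forall b, {a | A a /\ th b a}.
  move=> b; apply: constructive_indefinite_description.
  have [a Aa Ha] := full _ thc Htid b; by exists a.
pose p := fun b => proj1_sig (ex b).
have pA : forall b, A (p b) by move=> b; rewrite /p; case: (ex b) => ? [].
have pth : forall b, th b (p b) by move=> b; rewrite /p; case: (ex b) => ? [].
have hp : is_hom (B:=B) (C:=B) p.
  move=> o args; apply: inj; first exact: pA.
    by apply: subA => i; apply: pA.
  apply: (Tt _ (interp B o args)); first by apply: St.
  by apply: Ct => i.
have hid : is_hom (B:=B) (C:=B) id by [].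
have eq := epic B KB p id hp hid.
exfalso; apply: nb0.
rewrite -(eq _ b0) //.
move=> a Aa; symmetry; apply: inj => //.
Qed.
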